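(* Let $X_1,\dots,X_n$ be the $x$-slices of a tensor $T\in\overline{\mathrm{OT}_n(\mathbb{C})}$. Then the $n^2$ matrices $X_k^TX_l$ ($1\le k,l\le n$) are symmetric and approximately simultaneously diagonalizable, and likewise the $n^2$ matrices $X_kX_l^T$ are symmetric and approximately simultaneously diagonalizable. The same holds for the $y$-slices and for the $z$-slices.
   Context: Associate to $T$ the trilinear form $t=\sum_{i,j,k}T_{ijk}x_iy_jz_k$. $\mathrm{OT}_n(\mathbb{C})$ is the set of tensors whose trilinear form can be written $g(Ax,By,Cz)$ with $A,B,C$ complex orthogonal ($A^TA=\mathrm{Id}$) and $g=\sum_i\alpha_ix_iy_iz_i$; closure is in the Euclidean topology. Slices: $X_k=(T_{kjl})_{j,l}$, $Y_k=(T_{ikl})_{i,l}$, $Z_k=(T_{ijk})_{i,j}$. A tuple $(M_1,\dots,M_m)$ of matrices in $M_n(\mathbb{C})$ is approximately simultaneously diagonalizable if for every $\epsilon>0$ there are simultaneously diagonalizable $B_1,\dots,B_m$ with $\|M_i-B_i\|<\epsilon$ for all $i$. *)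

(* Defs.v *)
(* Complex numbers are modelled by an arbitrary
   numClosedFieldType C (C itself is such a field); the Euclidean topology
   is expressed through the norm `|_| of C, entrywise. *)
From HB Require Import structures.
From mathcomp Require Import all_boot all_order all_algebra.
Set Implicit Arguments. Unset Strict Implicit. Unset Printing Implicit Defensive.
Import Order.TTheory GRing.Theory Num.Theory.
Local Open Scope ring_scope.

Definition tensor (C : numClosedFieldType) (n : nat) := 'I_n -> 'I_n -> 'I_n -> C.

Definition trilin (C : numClosedFieldType) n (T : tensor C n)
  (x y z : 'cV[C]_n) : C :=
  \sum_(i < n) \sum_(j < n) \sum_(k < n) T i j k * x i 0 * y j 0 * z k 0.

Definition diag_form (C : numClosedFieldType) n (alpha : 'I_n -> C)
  (x y z : 'cV[C]_n) : C :=
  \sum_(i < n) alpha i * x i 0 * y i 0 * z i 0.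

Definition orthogonal_mx (C : numClosedFieldType) n (A : 'M[C]_n) : Prop :=
  A^T *m A = 1%:M.

Definition OT (C : numClosedFieldType) n (T : tensor C n) : Prop :=
  exists (A B D : 'M[C]_n) (alpha : 'I_n -> C),
    [/\ orthogonal_mx A, orthogonal_mx B, orthogonal_mx D &
      forall x y z : 'cV[C]_n,
        trilin T x y z = diag_form alpha (A *m x) (B *m y) (D *m z)].

(* Euclidean closure of OT_n(C) (entrywise sup-norm; all norms equivalent). *)
Definition OT_closure (C : numClosedFieldType) n (T : tensor C n) : Prop :=
  forall eps : C, 0 < eps ->
    exists T' : tensor C n, OT T' /\
      forall i j k, `|T i j k - T' i j k| < eps.

Definition xslice (C : numClosedFieldType) n (T : tensor C n) (k : 'I_n) : 'M[C]_n :=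
  \matrix_(j, l) T k j l.
Definition yslice (C : numClosedFieldType) n (T : tensor C n) (k : 'I_n) : 'M[C]_n :=
  \matrix_(i, l) T i k l.
Definition zslice (C : numClosedFieldType) n (T : tensor C n) (k : 'I_n) : 'M[C]_n :=
  \matrix_(i, j) T i j k.

Definition sim_diag (C : numClosedFieldType) n (I : finType) (B : I -> 'M[C]_n) : Prop :=
  exists P : 'M[C]_n, P \in unitmx /\
    forall i, is_diag_mx (invmx P *m B i *m P).

Definition approx_sim_diag (C : numClosedFieldType) n (I : finType)
  (M : I -> 'M[C]_n) : Prop :=
  forall eps : C, 0 < eps ->
    exists B : I -> 'M[C]_n, sim_diag B /\
      forall i a b, `|M i a b - B i a b| < eps.

Definition slices_property (C : numClosedFieldType) n (S : 'I_n -> 'M[C]_n) : Prop :=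
  [/\ forall k l, ((S k)^T *m S l)^T = (S k)^T *m S l,
      approx_sim_diag (fun p : 'I_n * 'I_n => (S p.1)^T *m S p.2),
      forall k l, (S k *m (S l)^T)^T = S k *m (S l)^T &
      approx_sim_diag (fun p : 'I_n * 'I_n => S p.1 *m (S p.2)^T)].

(* Main.v *)
From HB Require Import structures.
From mathcomp Require Import all_boot all_order all_algebra.
From mathcomp Require Import ring.
Require Import Defs.
Set Implicit Arguments. Unset Strict Implicit. Unset Printing Implicit Defensive.
Import Order.TTheory GRing.Theory Num.Theory.
Local Open Scope ring_scope.

Section Alg.
Variable C : numClosedFieldType.
Variable n : nat.

Lemma orth_r (U : 'M[C]_n) : orthogonal_mx U -> U *m U^T = 1%:M.
Proof. by move=> H; apply: mulmx1C. Qed.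

Lemma exact_part (I : finType) (U : 'M[C]_n) (d : I -> 'rV[C]_n) :
  orthogonal_mx U ->
  (forall p, (U^T *m diag_mx (d p) *m U)^T = U^T *m diag_mx (d p) *m U) /\
  sim_diag (fun p => U^T *m diag_mx (d p) *m U).
Proof.
move=> HU; split.
  by move=> p; rewrite !trmx_mul trmxK tr_diag_mx mulmxA.
have [uUt uU] := mulmx1_unit HU.
have inv : invmx U^T = U.
  transitivity (invmx U^T *m (U^T *m U)); first by rewrite HU mulmx1.
  by rewrite mulmxA mulVmx ?unitmx_tr // mul1mx.
exists U^T; split => // p.
rewrite inv !mulmxA (orth_r HU) mul1mx -mulmxA (orth_r HU) mulmx1.
exact: diag_mx_is_diag.
Qed.

Lemma prod_forms (P Q : 'M[C]_n) (c : 'I_n -> 'rV[C]_n) (S : 'I_n -> 'M[C]_n) :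
  orthogonal_mx P -> orthogonal_mx Q ->
  (forall k, S k = P^T *m diag_mx (c k) *m Q) ->
  (forall k l, (S k)^T *m S l = Q^T *m diag_mx (\row_j (c k 0 j * c l 0 j)) *m Q) /\
  (forall k l, S k *m (S l)^T = P^T *m diag_mx (\row_j (c k 0 j * c l 0 j)) *m P).
Proof.
move=> HP HQ HS; split => k l; rewrite !HS.
  rewrite !trmx_mul trmxK tr_diag_mx !mulmxA -[Q^T *m _ *m P *m P^T]mulmxA (orth_r HP) mulmx1.
  by rewrite -[Q^T *m _ *m diag_mx _]mulmxA mulmx_diag.
rewrite !trmx_mul trmxK tr_diag_mx !mulmxA -[P^T *m _ *m Q *m Q^T]mulmxA (orth_r HQ) mulmx1.
by rewrite -[P^T *m _ *m diag_mx _]mulmxA mulmx_diag.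
Qed.

Lemma sum_delta (F : 'I_n -> C) k :
  \sum_(k' < n) F k' * (delta_mx k 0 : 'cV[C]_n) k' 0 = F k.
Proof.
rewrite (bigD1 k) //= big1 => [|k' nk]; first by rewrite mxE !eqxx mulr1 addr0.
by rewrite mxE (negbTE nk) mulr0.
Qed.

Lemma OT_coef (T : tensor C n) : OT T ->
  exists (A B D : 'M[C]_n) (alpha : 'I_n -> C),
   [/\ orthogonal_mx A, orthogonal_mx B, orthogonal_mx D &
    forall i j k, T i j k = \sum_(r < n) alpha r * A r i * B r j * D r k].
Proof.
move=> [A [B [D [alpha [HA HB HD H]]]]].
exists A, B, D, alpha; split => // i j k.
have := H (delta_mx i 0) (delta_mx j 0) (delta_mx k 0).
rewrite /trilin /diag_form.
have E : forall (M : 'M[C]_n) i r, (M *m (delta_mx i 0 : 'cV[C]_n)) r 0 = M r i.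
  by move=> M i' r; rewrite -(colE i' M) mxE.
under eq_bigr => i' _ do under eq_bigr => j' _ do rewrite sum_delta.
under eq_bigr => i' _ do rewrite sum_delta.
rewrite sum_delta => ->.
by apply: eq_bigr => r _; rewrite !E.
Qed.


Lemma slice_reps (T : tensor C n) : OT T ->
  exists (A B D : 'M[C]_n) (alpha : 'I_n -> C),
   [/\ orthogonal_mx A, orthogonal_mx B, orthogonal_mx D & [/\
    forall k, xslice T k = B^T *m diag_mx (\row_r (alpha r * A r k)) *m D,
    forall k, yslice T k = A^T *m diag_mx (\row_r (alpha r * B r k)) *m D &
    forall k, zslice T k = A^T *m diag_mx (\row_r (alpha r * D r k)) *m B]].
Proof.
move=> /OT_coef [A [B [D [alpha [HA HB HD H]]]]].
exists A, B, D, alpha; split => //; split => k; apply/matrixP => a b;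
  rewrite mul_mx_diag !mxE H; apply: eq_bigr => r _; rewrite !mxE; ring.
Qed.

Lemma term_close (K d u v u' v' : C) : 0 <= K -> 0 <= d -> d <= 1 ->
  `|u| <= K -> `|v| <= K -> `|u - u'| < d -> `|v - v'| < d ->
  `|u * v - u' * v'| <= d * (K * 2 + 1).
Proof.
move=> K0 d0 d1 hu hv huu hvv.
have -> : u * v - u' * v' = u * (v - v') + (u - u') * v' by ring.
apply: le_trans (ler_normD _ _) _; rewrite !normrM.
have hv' : `|v'| <= K + 1.
  have -> : v' = v - (v - v') by ring.
  apply: le_trans (ler_normB _ _) _.
  by apply: lerD => //; apply: le_trans d1; apply: ltW.
have h1 : `|u| * `|v - v'| <= K * d by apply: ler_pM => //; apply: ltW.
have h2 : `|u - u'| * `|v'| <= d * (K + 1) by apply: ler_pM => //; apply: ltW.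
apply: le_trans (lerD h1 h2) _.
have -> : K * d + d * (K + 1) = d * (K * 2 + 1) by ring.
by [].
Qed.

Lemma sum_close (K d : C) (u v u' v' : 'I_n -> C) : 0 <= K -> 0 <= d -> d <= 1 ->
  (forall j, `|u j| <= K) -> (forall j, `|v j| <= K) ->
  (forall j, `|u j - u' j| < d) -> (forall j, `|v j - v' j| < d) ->
  `|\sum_j u j * v j - \sum_j u' j * v' j| <= n%:R * (d * (K * 2 + 1)).
Proof.
move=> K0 d0 d1 hu hv huu hvv.
rewrite -sumrB; apply: le_trans (ler_norm_sum _ _ _) _.
apply: le_trans (ler_sum _ (G := fun _ => d * (K * 2 + 1)) _) _.
  by move=> j _; apply: term_close.
by rewrite sumr_const card_ord mulr_natl.
Qed.

Lemma prod_close (K d : C) (S S' : 'I_n -> 'M[C]_n) : 0 <= K -> 0 <= d -> d <= 1 ->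
  (forall k a b, `|S k a b| <= K) -> (forall k a b, `|S k a b - S' k a b| < d) ->
  forall k l a b,
  `|((S k)^T *m S l) a b - ((S' k)^T *m S' l) a b| <= n%:R * (d * (K * 2 + 1)) /\
  `|(S k *m (S l)^T) a b - (S' k *m (S' l)^T) a b| <= n%:R * (d * (K * 2 + 1)).
Proof.
move=> K0 d0 d1 hS hSS k l a b; rewrite !mxE.
by split; apply: sum_close => // j; rewrite ?mxE.
Qed.

Lemma pick_delta (c eps : C) : 0 <= c -> 0 < eps ->
  exists d, [/\ 0 < d, d <= 1 & d * c < eps].
Proof.
move=> c0 e0.
have c1 : 0 < c + 1 by apply: lt_le_trans (ltr01) _; rewrite lerDr.
have cc : c < c + 1 by rewrite ltrDl ltr01.
case: (boolP (eps <= c + 1)) => he.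
  exists (eps / (c + 1)); split.
  - by apply: divr_gt0.
  - by rewrite ler_pdivrMr // mul1r.
  - by rewrite mulrAC ltr_pdivrMr // ltr_pM2l.
exists 1; split => //; rewrite mul1r.
apply: lt_trans cc _.
by rewrite real_ltNge ?gtr0_real.
Qed.

Lemma le_sum1 (F : 'I_n -> C) i : (forall i, 0 <= F i) -> F i <= \sum_j F j.
Proof.
by move=> H; rewrite (bigD1 i) //= lerDl sumr_ge0.
Qed.


Lemma sym_lim (M : 'M[C]_n) :
  (forall eps : C, 0 < eps -> exists M' : 'M[C]_n, M'^T = M' /\ forall a b, `|M a b - M' a b| < eps) ->
  M^T = M.
Proof.
move=> H; apply/matrixP => a b; rewrite mxE.
apply/eqP; rewrite -subr_eq0; apply/negPn/negP => hne.
set x := M b a - M a b.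
have hx : 0 < `|x| by rewrite normr_gt0.
have [M' [hs hM]] := H (`|x| / 2) (divr_gt0 hx (ltr0Sn _ 1)).
have e : M' b a = M' a b by rewrite -[in LHS]hs mxE.
have : `|x| < `|x| / 2 + `|x| / 2.
  have ex : x = (M b a - M' b a) + (M' a b - M a b) by rewrite e addrA subrK.
  rewrite {1}ex.
  apply: le_lt_trans (ler_normD _ _) _.
  by apply: ltrD; [apply: hM | rewrite distrC; apply: hM].
by rewrite -splitr ltxx.
Qed.

Lemma generic (T : tensor C n) (S : tensor C n -> 'I_n -> 'M[C]_n) :
  (forall (T T' : tensor C n) d, (forall i j k, `|T i j k - T' i j k| < d) ->
     forall k a b, `|S T k a b - S T' k a b| < d) ->
  (forall (T : tensor C n) K, (forall i j k, `|T i j k| <= K) -> forall k a b, `|S T k a b| <= K) ->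
  (forall T', OT T' -> exists (P Q : 'M[C]_n) (c : 'I_n -> 'rV[C]_n),
      [/\ orthogonal_mx P, orthogonal_mx Q & forall k, S T' k = P^T *m diag_mx (c k) *m Q]) ->
  OT_closure T -> slices_property (S T).
Proof.
move=> HS1 HS2 HS3 HT.
set K := \sum_i \sum_j \sum_k `|T i j k|.
have K0 : 0 <= K by do 3 (apply: sumr_ge0 => ? _).
have HK : forall i j k, `|T i j k| <= K.
  move=> i j k.
  apply: le_trans (le_sum1 (F := fun k => `|T i j k|) k _) _ => // .
  apply: le_trans (le_sum1 (F := fun j => \sum_k `|T i j k|) j _) _.
    by move=> ?; apply: sumr_ge0.
  apply: (le_sum1 (F := fun i => \sum_j \sum_k `|T i j k|) i).
  by move=> ?; do 2 (apply: sumr_ge0 => ? _).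
have c0 : 0 <= n%:R * (K * 2 + 1).
  by apply: mulr_ge0 => //; apply: addr_ge0 => //; apply: mulr_ge0.
have approx : forall eps, 0 < eps -> exists T', OT T' /\ forall k l a b,
   `|((S T k)^T *m S T l) a b - ((S T' k)^T *m S T' l) a b| < eps /\
   `|(S T k *m (S T l)^T) a b - (S T' k *m (S T' l)^T) a b| < eps.
  move=> eps e0.
  have [d [d0 d1 dc]] := pick_delta c0 e0.
  have [T' [OT' HT']] := HT d d0.
  exists T'; split => // k l a b.
  have [h1 h2] := prod_close K0 (ltW d0) d1 (HS2 T K HK) (HS1 T T' d HT') k l a b.
  have e : n%:R * (d * (K * 2 + 1)) = d * (n%:R * (K * 2 + 1)) by ring.
  by rewrite e in h1 h2; split; apply: le_lt_trans dc.
have exact : forall T', OT T' ->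
   [/\ forall k l, ((S T' k)^T *m S T' l)^T = (S T' k)^T *m S T' l,
       sim_diag (fun p : 'I_n * 'I_n => (S T' p.1)^T *m S T' p.2),
       forall k l, (S T' k *m (S T' l)^T)^T = S T' k *m (S T' l)^T &
       sim_diag (fun p : 'I_n * 'I_n => S T' p.1 *m (S T' p.2)^T)].
  move=> T' /HS3 [P [Q [c [HP HQ Hc]]]].
  have [F1 F2] := prod_forms HP HQ Hc.
  have [s1 d1] := exact_part (fun p : 'I_n * 'I_n => \row_j (c p.1 0 j * c p.2 0 j)) HQ.
  have [s2 d2] := exact_part (fun p : 'I_n * 'I_n => \row_j (c p.1 0 j * c p.2 0 j)) HP.
  split.
  - by move=> k l; rewrite F1; apply: (s1 (k, l)).
  - by case: d1 => P0 [u hd]; exists P0; split => // p; rewrite F1; apply: hd.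
  - by move=> k l; rewrite F2; apply: (s2 (k, l)).
  - by case: d2 => P0 [u hd]; exists P0; split => // p; rewrite F2; apply: hd.
split.
- move=> k l; apply: sym_lim => eps e0.
  have [T' [OT' H]] := approx eps e0.
  have [s1 _ _ _] := exact T' OT'.
  by exists ((S T' k)^T *m S T' l); split => // a b; case: (H k l a b).
- move=> eps e0.
  have [T' [OT' H]] := approx eps e0.
  have [_ s1 _ _] := exact T' OT'.
  by exists (fun p : 'I_n * 'I_n => (S T' p.1)^T *m S T' p.2); split => // p a b; case: (H p.1 p.2 a b).
- move=> k l; apply: sym_lim => eps e0.
  have [T' [OT' H]] := approx eps e0.
  have [_ _ s1 _] := exact T' OT'.
  by exists (S T' k *m (S T' l)^T); split => // a b; case: (H k l a b).
- move=> eps e0.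
  have [T' [OT' H]] := approx eps e0.
  have [_ _ _ s1] := exact T' OT'.
  by exists (fun p : 'I_n * 'I_n => S T' p.1 *m (S T' p.2)^T); split => // p a b; case: (H p.1 p.2 a b).
Qed.

End Alg.

Theorem proposition48 (C : numClosedFieldType) (n : nat) (T : tensor C n) :
  OT_closure T ->
  [/\ slices_property (xslice T), slices_property (yslice T)
    & slices_property (zslice T)].
Proof.
move=> HT; split; apply: generic HT.
- by move=> T1 T2 d H k a b; rewrite !mxE.
- by move=> T1 K H k a b; rewrite !mxE.
- by move=> T' /slice_reps [A [B [D [al [HA HB HD [Hx _ _]]]]]]; exists B, D, (fun k => \row_r (al r * A r k)).
- by move=> T1 T2 d H k a b; rewrite !mxE.
- by move=> T1 K H k a b; rewrite !mxE.
- by move=> T' /slice_reps [A [B [D [al [HA HB HD [_ Hy _]]]]]]; exists A, D, (fun k => \row_r (al r * B r k)).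
- by move=> T1 T2 d H k a b; rewrite !mxE.
- by move=> T1 K H k a b; rewrite !mxE.
- by move=> T' /slice_reps [A [B [D [al [HA HB HD [_ _ Hz]]]]]]; exists A, B, (fun k => \row_r (al r * D r k)).
Qed.
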